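(* Assume $\inf_{x\in X}\mu(B_x(1/2))>0$. Let $T\in\mathscr{B}(X)$ be a controlled operator and $\xi$ a filter on $X$ finer than the Fréchet filter. Then $\inf_{F\in\mathrm{co}(\xi)}\|\mathbf{1}_FT\|=0$ (infimum over measurable $F\in\mathrm{co}(\xi)$) if and only if $\lim_{x\to\xi}\|\mathbf{1}_{B_x(r)}T\|=0$ for all $r>0$.
   Context: Let $(X,d)$ be a non-compact proper metric space (closed balls $B_x(r)=\{y:d(x,y)\le r\}$ compact) and $\mu$ a Radon measure with support $X$, with $\mu(B_x(r))>0$ and $\sup_x\mu(B_x(r))<\infty$ for all $r>0$. $\mathscr{B}(X)$ = bounded operators on $L^2(X,\mu)$; $\mathbf{1}_A$ is multiplication by the characteristic function of measurable $A$. $T\in\mathscr{B}(X)$ is controlled if there is $r>0$ such that $\mathbf{1}_FT\mathbf{1}_G=0$ for all closed $F,G\subset X$ with $d(F,G)>r$. Fréchet filter = sets with relatively compact complement. $\lim_{x\to\xi}f(x)=0$ means $\{x:|f(x)|<\varepsilon\}\in\xi$ for all $\varepsilon>0$. $F^{(r)}=\{x:\inf_{y\notin F}d(x,y)>r\}$ and $\mathrm{co}(\xi)=\{F\subset X:F^{(r)}\in\xi\ \forall r>0\}$. *)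

(* Defs.v *)
From mathcomp Require Import all_boot all_order all_algebra.
From mathcomp Require Import all_classical all_reals all_analysis.
From mathcomp Require Import complex.

Set Implicit Arguments.
Unset Strict Implicit.
Unset Printing Implicit Defensive.

Import Order.TTheory GRing.Theory Num.Theory.
Local Open Scope classical_set_scope.
Local Open Scope ring_scope.

Notation Cx R := (complex.complex (R : rcfType)).

Section Metric.
Context {R : realType} {X : Type} (dist : X -> X -> R).

Definition is_metric : Prop :=
  [/\ forall x y, 0 <= dist x y,
      forall x y, dist x y = 0 <-> x = y,
      forall x y, dist x y = dist y x
    & forall x y z, dist x z <= dist x y + dist y z].

Definition cball (x : X) (r : R) : set X := [set y | dist x y <= r].
Definition oball (x : X) (r : R) : set X := [set y | dist x y < r].

Definition dopen (A : set X) : Prop :=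
  forall x, A x -> exists2 r : R, 0 < r & oball x r `<=` A.

Definition dclosed (A : set X) : Prop := dopen (~` A).

Definition dclosure (A : set X) : set X :=
  [set x | forall r : R, 0 < r -> exists2 y, A y & dist x y < r].

Definition dcompact (K : set X) : Prop :=
  forall (I : Type) (U : I -> set X), (forall i, dopen (U i)) ->
    K `<=` \bigcup_(i in [set: I]) U i ->
    exists2 J : set I, finite_set J & K `<=` \bigcup_(i in J) U i.

Definition proper_metric : Prop := forall x r, dcompact (cball x r).

(* d(F,G) = inf { d(x,y) : x in F, y in G } (= +oo if F or G is empty) *)
Definition setdist (A B : set X) : \bar R :=
  ereal_inf [set (dist p.1 p.2)%:E | p in A `*` B].

Definition frechet : set_system X := [set A | dcompact (dclosure (~` A))].

Definition inner_r (F : set X) (r : R) : set X :=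
  [set x | (r%:E < ereal_inf [set (dist x y)%:E | y in ~` F])%E].

Definition co (xi : set_system X) : set_system X :=
  [set F | forall r : R, 0 < r -> xi (inner_r F r)].

End Metric.

Section Measure.
Context {R : realType} {d : measure_display} {X : measurableType d}
  (dist : X -> X -> R) (mu : {measure set X -> \bar R}).

Definition borel_sigma : Prop := @measurable _ X = <<s dopen dist >>.

Definition locally_finite : Prop :=
  forall x, exists2 U, dopen dist U /\ U x & (mu U < +oo)%E.

Definition outer_regular : Prop :=
  forall A, measurable A ->
    mu A = ereal_inf [set mu U | U in [set U | dopen dist U /\ A `<=` U]].

Definition inner_regular_open : Prop :=
  forall U, dopen dist U ->
    mu U = ereal_sup [set mu K | K in [set K | dcompact dist K /\ K `<=` U]].

Definition radon : Prop :=
  [/\ locally_finite, outer_regular & inner_regular_open].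

(* supp mu = X : every nonempty open set has positive measure *)
Definition full_support : Prop :=
  forall U, dopen dist U -> U !=set0 -> (0 < mu U)%E.

Definition cmod (z : Cx R) : R :=
  Num.sqrt (complex.Re z ^+ 2 + complex.Im z ^+ 2).

Definition cmeasurable (f : X -> Cx R) : Prop :=
  measurable_fun setT (fun x => complex.Re (f x)) /\
  measurable_fun setT (fun x => complex.Im (f x)).

Definition L2norm (f : X -> Cx R) : \bar R :=
  Lnorm mu 2%:E (fun x => (cmod (f x))%:E).

(* f is a representative of an element of L^2(X, mu) *)
Definition L2 (f : X -> Cx R) : Prop := cmeasurable f /\ (L2norm f < +oo)%E.

Definition ae_eq (f g : X -> Cx R) : Prop := {ae mu, forall x, f x = g x}.

(* A bounded operator on L^2(X,mu), given on representatives: it maps L^2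
   to L^2, is compatible with a.e. equality, is C-linear (a.e.) and is
   bounded. *)
Definition bounded_operator (T : (X -> Cx R) -> (X -> Cx R)) : Prop :=
  [/\ forall f, L2 f -> L2 (T f),
      forall f g, L2 f -> L2 g -> ae_eq f g -> ae_eq (T f) (T g),
      forall (a : Cx R) f g, L2 f -> L2 g ->
        ae_eq (T (fun x => a * f x + g x)) (fun x => a * T f x + T g x)
    & exists M : R, forall f, L2 f -> (L2norm (T f) <= M%:E * L2norm f)%E].

Definition opnorm (S : (X -> Cx R) -> (X -> Cx R)) : \bar R :=
  ereal_sup [set L2norm (S f) | f in [set f | L2 f /\ (L2norm f <= 1)%E]].

Definition indl (F : set X) (T : (X -> Cx R) -> (X -> Cx R)) :
  (X -> Cx R) -> (X -> Cx R) := fun f x => \1_F x * T f x.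

Definition indr (T : (X -> Cx R) -> (X -> Cx R)) (G : set X) :
  (X -> Cx R) -> (X -> Cx R) := fun f => T (fun x => \1_G x * f x).

Definition controlled (T : (X -> Cx R) -> (X -> Cx R)) : Prop :=
  exists2 r : R, 0 < r &
    forall F G, dclosed dist F -> dclosed dist G ->
      (r%:E < setdist dist F G)%E ->
      forall f, L2 f -> ae_eq (indl F (indr T G) f) (fun _ => 0).

End Measure.

(* Main.v *)
Require Import Defs.
From mathcomp Require Import all_boot all_order all_algebra.
From mathcomp Require Import all_classical all_reals all_analysis.
From mathcomp Require Import complex.
From mathcomp Require Import measurable_realfun lra.
Import Order.TTheory GRing.Theory Num.Theory.
Local Open Scope classical_set_scope.
Local Open Scope ring_scope.

Section MetricLemmas.
Context {R : realType} {X : Type} (dist : X -> X -> R) (Hm : is_metric dist).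

Lemma dist_ge0 x y : 0 <= dist x y. Proof. by case: Hm. Qed.
Lemma dist_xx x : dist x x = 0. Proof. by case: Hm => _ h _ _; apply/h. Qed.
Lemma distC x y : dist x y = dist y x. Proof. by case: Hm. Qed.
Lemma dist_tri x y z : dist x z <= dist x y + dist y z. Proof. by case: Hm. Qed.

Lemma dopen_oball x r : dopen dist (oball dist x r).
Proof.
move=> y; rewrite /oball /= => hy; exists (r - dist x y); first by rewrite subr_gt0.
move=> z; rewrite /oball /= => hz.
by apply: (le_lt_trans (dist_tri x y z)); rewrite -ltrBrDl.
Qed.

Lemma dclosed_cball x r : dclosed dist (cball dist x r).
Proof.
move=> y; rewrite /cball /= => /negP; rewrite -ltNge => hy.
exists (dist x y - r); first by rewrite subr_gt0.
move=> z; rewrite /oball /= => hz /=; apply/negP; rewrite -ltNge.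
have := dist_tri x z y; rewrite [dist z y]distC => h.
have : dist x y - dist y z <= dist x z by rewrite lerBlDr.
apply: lt_le_trans; by rewrite ltrBrDl addrC -ltrBrDl.
Qed.

Lemma dclosedC_open A : dopen dist A -> dclosed dist (~` A).
Proof. by rewrite /dclosed setCK. Qed.

Lemma cball_sub x y r s : dist x y + r <= s -> cball dist y r `<=` cball dist x s.
Proof.
move=> h z; rewrite /cball /= => hz.
apply: (le_trans (dist_tri x y z)); apply: le_trans h; by rewrite lerD2l.
Qed.

End MetricLemmas.

Section MeasLemmas.
Local Open Scope complex_scope.
Context {R : realType} {d : measure_display} {X : measurableType d}
  (dist : X -> X -> R) (mu : {measure set X -> \bar R})
  (Hm : is_metric dist) (Hborel : borel_sigma dist).

Implicit Types (g h : X -> Cx R) (A : set X).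
Definition sqn (z : Cx R) : R := complex.Re z ^+ 2 + complex.Im z ^+ 2.
Definition Qd (g : X -> Cx R) : \bar R := (\int[mu]_x (sqn (g x))%:E)%E.

Lemma sqn_ge0 z : 0 <= sqn z.
Proof. by rewrite addr_ge0 ?sqr_ge0. Qed.

Lemma cmod_sq z : cmod z ^+ 2 = sqn z.
Proof. by rewrite /cmod sqr_sqrtr // sqn_ge0. Qed.

Lemma cmod_ge0 (z : Cx R) : 0 <= cmod z.
Proof. exact: sqrtr_ge0. Qed.

Lemma Q_ge0 g : (0 <= Qd g)%E.
Proof. by apply: integral_ge0 => x _; rewrite lee_fin sqn_ge0. Qed.

Lemma L2normE g : L2norm mu g = sqrte (Qd g).
Proof.
rewrite /L2norm unlock /Lnorm -poweR12_sqrt ?Q_ge0 //; congr (_ `^ _)%E.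
apply: eq_integral => x _ /=. 
by rewrite powR_mulrn ?normr_ge0 // ger0_norm ?cmod_ge0 // cmod_sq.
Qed.

Lemma meas_sqn g : cmeasurable g -> measurable_fun setT (fun x => (sqn (g x))%:E).
Proof.
case=> hre him; apply/measurable_EFinP; rewrite /sqn.
by apply: measurable_funD; apply: measurable_funX.
Qed.

Lemma meas_open A : dopen dist A -> measurable A.
Proof. by move=> hA; rewrite Hborel; apply: sub_sigma_algebra. Qed.

Lemma meas_closed A : dclosed dist A -> measurable A.
Proof. by move=> hA; rewrite -[A]setCK; apply: measurableC; apply: meas_open. Qed.

Lemma meas_cball x r : measurable (cball dist x r).
Proof. exact/meas_closed/dclosed_cball. Qed.

Lemma meas_oball x r : measurable (oball dist x r).
Proof. exact/meas_open/dopen_oball. Qed.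

Lemma Re_ind (A : set X) x (z : Cx R) : complex.Re (\1_A x * z) = \1_A x * complex.Re z.
Proof. by rewrite /indic; case: (x \in A); rewrite /= ?mul1r ?mul0r. Qed.
Lemma Im_ind (A : set X) x (z : Cx R) : complex.Im (\1_A x * z) = \1_A x * complex.Im z.
Proof. by rewrite /indic; case: (x \in A); rewrite /= ?mul1r ?mul0r. Qed.
Lemma sqn_ind (A : set X) x (z : Cx R) : sqn (\1_A x * z) = \1_A x * sqn z.
Proof. by rewrite /indic; case: (x \in A); rewrite /= ?mul1r ?mul0r // /sqn /= expr0n /= addr0. Qed.

Lemma Re_sc (a : R) (z : Cx R) : complex.Re (a%:C * z) = a * complex.Re z.
Proof. by case: z => u v /=; rewrite mul0r subr0. Qed.
Lemma Im_sc (a : R) (z : Cx R) : complex.Im (a%:C * z) = a * complex.Im z.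
Proof. by case: z => u v /=; rewrite mul0r addr0. Qed.
Lemma sqn_sc (a : R) (z : Cx R) : sqn (a%:C * z) = a ^+ 2 * sqn z.
Proof. by rewrite /sqn Re_sc Im_sc !exprMn mulrDr. Qed.

Lemma cmeas_ind A g : measurable A -> cmeasurable g ->
  cmeasurable (fun x => \1_A x * g x).
Proof.
move=> mA [hre him]; split.
  under eq_fun do rewrite Re_ind.
  by apply: measurable_funM => //; apply: measurable_indic.
under eq_fun do rewrite Im_ind.
by apply: measurable_funM => //; apply: measurable_indic.
Qed.

Lemma cmeas_sc (a : R) g : cmeasurable g -> cmeasurable (fun x => a%:C * g x).
Proof.
move=> [hre him]; split.
  under eq_fun do rewrite Re_sc.
  by apply: measurable_funM => //; apply: measurable_cst.
under eq_fun do rewrite Im_sc.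
by apply: measurable_funM => //; apply: measurable_cst.
Qed.

Lemma Re_add (z w : Cx R) : complex.Re (z + w) = complex.Re z + complex.Re w.
Proof. by case: z; case: w. Qed.
Lemma Im_add (z w : Cx R) : complex.Im (z + w) = complex.Im z + complex.Im w.
Proof. by case: z; case: w. Qed.

Lemma cmeas_add g h : cmeasurable g -> cmeasurable h -> cmeasurable (fun x => g x + h x).
Proof.
move=> [hre him] [hre' him']; split => /=.
  under eq_fun do rewrite Re_add.
  by apply: measurable_funD.
under eq_fun do rewrite Im_add.
by apply: measurable_funD.
Qed.

Lemma cmeas0 : cmeasurable (fun _ : X => 0 : Cx R).
Proof. by split; apply: measurable_cst. Qed.

Lemma L2E g : L2 mu g <-> cmeasurable g /\ (Qd g < +oo)%E.
Proof.
rewrite /L2 L2normE; split => -[hm hq]; split => //.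
  by move: hq; rewrite -!ge0_fin_numE ?sqrte_ge0 ?Q_ge0 // sqrte_fin_num // Q_ge0.
by move: hq; rewrite -!ge0_fin_numE ?sqrte_ge0 ?Q_ge0 // sqrte_fin_num // Q_ge0.
Qed.

End MeasLemmas.

Section OpLemmas.
Local Open Scope complex_scope.
Context {R : realType} {d : measure_display} {X : measurableType d}
  {mu : {measure set X -> \bar R}}.
Implicit Types (g h : X -> Cx R) (A : set X).
Local Notation Q := (Qd mu).

Lemma Q_aeeq g h : cmeasurable g -> cmeasurable h -> Defs.ae_eq mu g h -> Q g = Q h.
Proof.
move=> cg ch hae; rewrite /Qd; apply: ae_eq_integral => //.
- exact: (meas_sqn _ cg).
- exact: (meas_sqn _ ch).
move: hae; rewrite /Defs.ae_eq /ae_eq. apply: filterS.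
by move=> x /= -> _.
Qed.

Lemma Q_ind_le A g : measurable A -> cmeasurable g ->
  (Q (fun x => (\1_A x * g x)%R) <= Q g)%E.
Proof.
move=> mA cg; apply: ge0_le_integral => //.
- by move=> x _; rewrite lee_fin sqn_ge0.
- exact: (meas_sqn _ (cmeas_ind _ _ mA cg)).
- exact: (meas_sqn _ cg).
move=> x _; rewrite lee_fin sqn_ind /indic; case: (x \in A); rewrite /= ?mul1r ?mul0r //.
exact: sqn_ge0.
Qed.

Lemma Q_sc (a : R) g : cmeasurable g ->
  Q (fun x => a%:C * g x) = ((a ^+ 2)%:E * Q g)%E.
Proof.
move=> cg; rewrite /Q -ge0_integralZl_EFin //.
- by apply: eq_integral => x _; rewrite sqn_sc EFinM.
- by move=> x _; rewrite lee_fin sqn_ge0.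
- exact: (meas_sqn _ cg).
- exact: sqr_ge0.
Qed.

Lemma Q0 : Q (fun _ => 0) = 0%E.
Proof.
rewrite /Q; under eq_integral do rewrite /sqn /= expr0n /= addr0.
exact: integral0.
Qed.

Lemma L2_0 : L2 mu (fun _ => 0 : Cx R).
Proof. by apply/L2E; split; [exact: cmeas0| rewrite Q0]. Qed.

Lemma L2_ind A g : measurable A -> L2 mu g -> L2 mu (fun x => \1_A x * g x).
Proof.
move=> mA /L2E [cg qg]; apply/L2E; split; first exact: cmeas_ind.
exact: le_lt_trans (Q_ind_le _ _ mA cg) qg.
Qed.

Lemma L2_sc (a : R) g : L2 mu g -> L2 mu (fun x => a%:C * g x).
Proof.
move=> /L2E [cg qg]; apply/L2E; split; first exact: cmeas_sc.
rewrite Q_sc //; have qfin : Q g \is a fin_num by rewrite ge0_fin_numE // Q_ge0.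
by rewrite -(fineK qfin) -EFinM ltry.
Qed.

Context {T : (X -> Cx R) -> (X -> Cx R)} (HT : bounded_operator mu T).

Lemma T_L2 g : L2 mu g -> L2 mu (T g).
Proof. by case: HT => h _ _ _; exact: h. Qed.

Lemma T_ae g h : L2 mu g -> L2 mu h -> Defs.ae_eq mu g h -> Defs.ae_eq mu (T g) (T h).
Proof. by case: HT => _ h' _ _; exact: h'. Qed.

Lemma T0 : Defs.ae_eq mu (T (fun _ => 0)) (fun _ => 0).
Proof.
case: HT => _ _ hlin _.
have := hlin 1 (fun _ => 0) (fun _ => 0) L2_0 L2_0.
have -> : (fun _ : X => 1 * 0 + 0) = (fun _ => 0 : Cx R).
  by apply: funext => x; rewrite mul1r addr0.
apply: filterS => x; rewrite mul1r => h.
by apply: (addrI (T (fun _ => 0) x)); rewrite addr0 -h.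
Qed.

Lemma T_sc (a : Cx R) g : L2 mu g ->
  Defs.ae_eq mu (T (fun x => a * g x)) (fun x => a * T g x).
Proof.
move=> Lg; case: HT => _ _ hlin _.
have := hlin a g (fun _ => 0) Lg L2_0.
have -> : (fun x => a * g x + 0) = (fun x => a * g x) by apply: funext => x; rewrite addr0.
move=> h1; apply: filterS2 h1 T0 => x -> ->; by rewrite addr0.
Qed.

Lemma T_add g h : L2 mu g -> L2 mu h ->
  Defs.ae_eq mu (T (fun x => g x + h x)) (fun x => T g x + T h x).
Proof.
move=> Lg Lh; case: HT => _ _ hlin _.
have := hlin 1 g h Lg Lh.
have -> : (fun x => 1 * g x + h x) = (fun x => g x + h x) by apply: funext => x; rewrite mul1r.
by apply: filterS => x ->; rewrite mul1r.
Qed.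

End OpLemmas.

Lemma sqrte_leE {R : realType} (x : \bar R) (e : R) : 0 <= e -> (0 <= x)%E ->
  (sqrte x <= e%:E)%E = (x <= (e ^+ 2)%:E)%E.
Proof.
move=> e0 x0; rewrite -[RHS]lee_sqrt ?lee_fin ?sqr_ge0 //=.
by rewrite sqrtr_sqr ger0_norm.
Qed.

Section OpNorm.
Local Open Scope complex_scope.
Context {R : realType} {d : measure_display} {X : measurableType d}
  (mu : {measure set X -> \bar R}).
Implicit Types (g h : X -> Cx R) (A B : set X).
Local Notation Q := (Qd mu).
Variable (T : (X -> Cx R) -> (X -> Cx R)) (HT : bounded_operator mu T).

Lemma L2norm_ge0 g : (0 <= L2norm mu g)%E.
Proof. by rewrite L2normE sqrte_ge0. Qed.

Lemma opnorm_elt {S f} : L2 mu f -> (L2norm mu f <= 1)%E ->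
  (L2norm mu (S f) <= opnorm mu S)%E.
Proof. by move=> Lf nf; apply: ereal_sup_ubound; exists f. Qed.

Lemma opnorm_ge0 S : (0 <= opnorm mu S)%E.
Proof.
apply: le_trans (opnorm_elt L2_0 _); first exact: L2norm_ge0.
by rewrite L2normE Q0 sqrte0.
Qed.

Lemma cmeas_indlT {A g} : measurable A -> L2 mu g -> cmeasurable (indl A T g).
Proof.
move=> mA Lg; apply: cmeas_ind => //.
by have /L2E [] := T_L2 HT _ Lg.
Qed.

Lemma opnorm_mono A B : measurable A -> measurable B -> A `<=` B ->
  (opnorm mu (indl A T) <= opnorm mu (indl B T))%E.
Proof.
move=> mA mB AB; apply: ge_ereal_sup => _ [f [Lf nf] <-].
apply: le_trans (opnorm_elt Lf nf).
rewrite !L2normE lee_sqrt ?Q_ge0 //.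
have -> : indl A T f = (fun x => \1_A x * indl B T f x).
  apply: funext => x; rewrite /indl mulrA; congr (_ * _).
  rewrite /indic; case: (boolP (x \in A)) => xA /=.
  2: by rewrite mul0r.
  have -> : x \in B by apply: mem_set; apply: AB; exact: set_mem xA.
  by rewrite /= mulr1.
exact: (Q_ind_le _ _ mA (cmeas_indlT mB Lf)).
Qed.

Lemma opnorm_scale B e g : measurable B -> 0 <= e ->
  (opnorm mu (indl B T) <= e%:E)%E -> L2 mu g ->
  (Q (indl B T g) <= (e ^+ 2)%:E * Q g)%E.
Proof.
move=> mB e0 hop Lg.
have [cg qg] := (L2E mu g).1 Lg.
have qfin : Q g \is a fin_num by rewrite ge0_fin_numE // Q_ge0.
set q := fine (Q g); have qE : Q g = q%:E by rewrite fineK.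
have q0 : 0 <= q by rewrite -lee_fin -qE Q_ge0.
rewrite qE; apply/lee_addgt0Pr => eta eta0.
set eta1 := eta / (e ^+ 2 + 1).
have e21 : 0 < e ^+ 2 + 1 by rewrite ltr_wpDl ?sqr_ge0.
have eta10 : 0 < eta1 by rewrite divr_gt0.
set s := q + eta1.
have s0 : 0 < s by rewrite ltr_wpDl.
set a := Num.sqrt (s^-1).
have a2 : a ^+ 2 = s^-1 by rewrite sqr_sqrtr // invr_ge0 ltW.
have a0 : 0 < a ^+ 2 by rewrite a2 invr_gt0.
set g' := fun x => a%:C * g x.
have Lg' : L2 mu g' := L2_sc a g Lg.
have ng' : (L2norm mu g' <= 1)%E.
  rewrite L2normE (sqrte_leE _ _ ler01) ?Q_ge0 // expr1n.
  rewrite Q_sc // qE -EFinM lee_fin a2 mulrC ler_pdivrMr //.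
  by rewrite mul1r /s lerDl ltW.
have h1 := le_trans (opnorm_elt Lg' ng') hop.
rewrite L2normE sqrte_leE ?Q_ge0 // in h1.
have hae : Defs.ae_eq mu (indl B T g') (fun x => a%:C * indl B T g x).
  apply: filterS (T_sc HT a%:C g Lg) => x; rewrite /indl => ->.
  by rewrite mulrCA.
rewrite (Q_aeeq _ _ (cmeas_indlT mB Lg') _ hae) in h1; last first.
  by apply: cmeas_sc; apply: cmeas_indlT.
rewrite Q_sc in h1; last exact: cmeas_indlT.
have h2 : (Q (indl B T g) <= ((a ^+ 2)^-1 * e ^+ 2)%:E)%E.
  by rewrite EFinM lee_pdivlMl //.
apply: le_trans h2 _.
rewrite a2 invrK -EFinM -EFinD lee_fin /s mulrDl [e ^+ 2 * q]mulrC lerD2l.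
rewrite mulrC /eta1 mulrA ler_pdivrMr //.
by rewrite mulrC ler_pM2l // lerDl.
Qed.

End OpNorm.

Section Ctrl.
Local Open Scope complex_scope.
Context {R : realType} {d : measure_display} {X : measurableType d}
  {dist : X -> X -> R} {mu : {measure set X -> \bar R}}
  (Hm : is_metric dist) (Hborel : borel_sigma dist).
Context {T : (X -> Cx R) -> (X -> Cx R)} (HT : bounded_operator mu T).
Variable r0 : R.
Hypothesis hctrl : forall F G, dclosed dist F -> dclosed dist G ->
      (r0%:E < setdist dist F G)%E ->
      forall f, L2 mu f -> Defs.ae_eq mu (indl F (indr T G) f) (fun _ => 0).

Lemma indicC_sum (A : set X) x : \1_A x + \1_(~` A) x = 1 :> Cx R.
Proof.
rewrite /indic in_setC; case: (x \in A) => /=; by rewrite ?addr0 ?add0r.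
Qed.

Lemma setdist_ball z s : 0 <= s ->
  (r0%:E < setdist dist (cball dist z s) (~` oball dist z (s + r0 + 1)))%E.
Proof.
move=> s0; apply: (@lt_le_trans _ _ (r0 + 1)%:E); first by rewrite lte_fin ltrDl.
apply: le_ereal_inf_tmp => _ [[p1 p2] [/= h1 h2] <-].
rewrite lee_fin; move: h2; rewrite /oball /= => /negP; rewrite -leNgt => h2.
have := dist_tri _ Hm z p1 p2.
move=> h3; have h4 := le_trans h2 h3.
by rewrite -(lerD2l s) (le_trans _ (lerD h1 (lexx (dist p1 p2)))) // addrA.
Qed.

Lemma ctrl_local z s f : 0 <= s -> L2 mu f ->
  Defs.ae_eq mu (indl (cball dist z s) T f)
    (indl (cball dist z s) T (fun x => \1_(oball dist z (s + r0 + 1)) x * f x)).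
Proof.
move=> s0 Lf.
set O := oball dist z (s + r0 + 1).
have mO : measurable O by apply: (meas_oball _ Hm Hborel).
have mOC : measurable (~` O) by apply: measurableC.
have fE : f = (fun x => \1_O x * f x + \1_(~` O) x * f x).
  by apply: funext => x; rewrite -mulrDl indicC_sum mul1r.
have LO := L2_ind _ _ mO Lf.
have LOC := L2_ind _ _ mOC Lf.
have h1 := T_add HT _ _ LO LOC.
have h2 := hctrl _ _ (dclosed_cball _ Hm z s) (dclosedC_open _ _ (dopen_oball _ Hm z (s + r0 + 1)))
  (setdist_ball z s s0) f Lf.
rewrite -fE in h1.
apply: filterS2 h1 h2 => x; rewrite /indl /indr => -> h.
by rewrite mulrDr h addr0.
Qed.

End Ctrl.

Section Greedy.
Context {R : realType} {X : Type} (dist : X -> X -> R) (Hm : is_metric dist).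
Variable c : nat -> X.

Fixpoint gL (k : nat) : seq nat :=
  match k with
  | 0 => [::]
  | k'.+1 => if all (fun j => 1 < dist (c j) (c k')) (gL k') then k' :: gL k' else gL k'
  end.

Definition gsel k := k \in gL k.+1.

Lemma gL_lt k j : j \in gL k -> (j < k)%N.
Proof.
elim: k => [//|k IH] /=; case: ifP => _; rewrite ?inE.
  by case/orP => [/eqP ->//|/IH /ltnW]; rewrite ltnS.
by move/IH => /ltnW; rewrite ltnS.
Qed.

Lemma gL_mem k j : (j \in gL k) = (j < k)%N && gsel j.
Proof.
elim: k => [//|k IH].
case: (ltngtP j k) => hjk.
- have -> : (j < k.+1)%N by apply: ltnW; rewrite ltnS.
  by rewrite /=; case: ifP => _; rewrite ?inE ?(ltn_eqF hjk) /= IH hjk.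
- rewrite ltnNge hjk andFb; apply/negP => H; have := gL_lt _ _ H.
  by rewrite ltnS leqNgt hjk.
- by rewrite hjk ltnSn.
Qed.

Lemma gsel_cond k : gsel k = all (fun j => 1 < dist (c j) (c k)) (gL k).
Proof.
rewrite /gsel /=; case: ifP => h; first by rewrite inE eqxx.
apply/negP => H; have := gL_lt _ _ H; by rewrite ltnn.
Qed.

Lemma gsel_sep i j : gsel i -> gsel j -> i != j -> 1 < dist (c i) (c j).
Proof.
wlog hij : i j / (i < j)%N.
  move=> W si sj nij; case: (ltngtP i j) => h.
  - exact: W.
  - by rewrite (distC _ Hm); apply: W => //; rewrite eq_sym.
  - by rewrite h eqxx in nij.
move=> si sj _; move: sj; rewrite gsel_cond => /allP; apply.
by rewrite gL_mem hij si.
Qed.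

Lemma gsel_cover k : exists2 j, gsel j & dist (c j) (c k) <= 1.
Proof.
case: (boolP (gsel k)) => h; first by exists k => //; rewrite (dist_xx _ Hm) ler01.
move: h; rewrite gsel_cond => /allPn [j hj hd].
exists j; first by move: hj; rewrite gL_mem => /andP[].
by rewrite leNgt.
Qed.

End Greedy.

Lemma net_exists {R : realType} {X : choiceType} (dist : X -> X -> R)
  (Hm : is_metric dist) (Hproper : proper_metric dist) (x0 : X) :
  exists c : nat -> X, exists sel : nat -> bool,
   (forall i j, sel i -> sel j -> i != j -> 1 < dist (c i) (c j)) /\
   (forall y, exists2 j, sel j & dist (c j) y <= 2).
Proof.
have hs : forall n : nat, exists s : seq X, forall y, dist x0 y <= n%:R ->
    exists2 z, z \in s & dist z y < 1.
  move=> n.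
  have [|J /finite_fsetP [B ->] hcov] := Hproper x0 n%:R X (fun y => oball dist y 1)
    (fun y => dopen_oball _ Hm y 1).
    by move=> y hy; exists y => //; rewrite /oball /= (dist_xx _ Hm) ltr01.
  exists (finmap.enum_fset B) => y hy; have [z Bz hz] := hcov y hy.
  by exists z.
have [s hsP] := choice hs.
pose c m := if @unpickle (nat * nat)%type m is Some p then nth x0 (s p.1) p.2 else x0.
have hc : forall y, exists m, dist (c m) y < 1.
  move=> y; set n := (Num.trunc (dist x0 y)).+1.
  have hy : dist x0 y <= n%:R by apply: ltW; apply: truncnS_gt.
  have [z zs hz] := hsP n y hy.
  exists (pickle (n, index z (s n))).
  by rewrite /c pickleK /= nth_index.
exists c, (gsel dist c); split; first exact: gsel_sep.
move=> y; have [m hm] := hc y; have [j sj hj] := gsel_cover dist Hm c m.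
exists j => //; apply: le_trans (dist_tri _ Hm _ (c m) _) _.
by rewrite -[2]/(1 + 1); apply: lerD => //; apply: ltW.
Qed.

Section Count.
Context {R : realType} {d : measure_display} {X : measurableType d}
  {dist : X -> X -> R} {mu : {measure set X -> \bar R}}
  (Hm : is_metric dist) (Hborel : borel_sigma dist).
Variables (c : nat -> X) (sel : nat -> bool).
Hypothesis hsep : forall i j, sel i -> sel j -> i != j -> 1 < dist (c i) (c j).
Variables (c0 : R) (rho M : R).
Hypothesis c0pos : 0 < c0.
Hypothesis hc0 : forall x, (c0%:E <= mu (cball dist x (2^-1)))%E.
Hypothesis hM : forall x, (mu (cball dist x (rho + 2^-1)) <= M%:E)%E.

Lemma count_bound y N :
  \sum_(n < N) ((sel n && (dist (c n) y < rho))%:R : R) <= M / c0.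
Proof.
pose b n := sel n && (dist (c n) y < rho).
pose A n := if b n then cball dist (c n) (2^-1) else set0.
have mA n : measurable (A n).
  by rewrite /A; case: (b n) => //; apply: (meas_cball _ Hm Hborel).
have tA : trivIset setT A.
  move=> i j _ _ [z [hi hj]]; apply/eqP; apply/negPn/negP => nij.
  move: hi hj; rewrite /A; case bi : (b i); last by [].
  case bj : (b j); last by [].
  move: bi bj => /andP[si _] /andP[sj _]; rewrite /cball /= => hi hj.
  have := hsep _ _ si sj nij; apply/negP; rewrite -leNgt.
  apply: le_trans (dist_tri _ Hm _ z _) _.
  by rewrite (distC _ Hm z) [X in _ <= X](splitr 1) mul1r lerD.
have hU : (mu (\big[setU/set0]_(i < N) A i) <= M%:E)%E.
  apply: (le_trans _ (hM y)); apply: (@le_measure _ _ _ mu).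
  - by rewrite inE; apply: bigsetU_measurable => i _.
  - by rewrite inE; exact: (meas_cball _ Hm Hborel).
  move=> z; move/(@bigsetU_bigcup _ A N) => [k _]; rewrite /A; case bk: (b k) => // hk.
  move: bk => /andP[_ hk']; rewrite /cball /=.
  apply: le_trans (dist_tri _ Hm _ (c k) _) _; apply: lerD => //.
  by rewrite (distC _ Hm); apply: ltW.
rewrite measure_bigsetU // in hU.
rewrite ler_pdivlMr //; rewrite -lee_fin; apply: le_trans hU.
rewrite mulr_suml -sumEFin; apply: lee_sum => i _.
rewrite /A -/(b i); case: (b i); first by rewrite mul1r hc0.
by rewrite mul0r measure0.
Qed.

End Count.

Section Sums.
Local Open Scope complex_scope.
Context {R : realType} {d : measure_display} {X : measurableType d}.

Lemma series_ge_term (u : nat -> \bar R) j : (forall n, (0 <= u n)%E) ->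
  (u j <= \sum_(0 <= n <oo) u n)%E.
Proof.
move=> u0; apply: le_trans (nneseries_lim_ge j.+1 (fun n _ _ => u0 n)).
rewrite big_nat_recr //=; apply: lee_paddl; last exact: lexx.
by apply: sume_ge0 => n _; exact: u0.
Qed.

Lemma series_le_cst (u : nat -> \bar R) (C : \bar R) : (forall n, (0 <= u n)%E) ->
  (forall N, (\sum_(0 <= n < N) u n <= C)%E) -> (\sum_(0 <= n <oo) u n <= C)%E.
Proof.
move=> u0 hN; apply: lime_le; first exact: is_cvg_nneseries.
by apply: nearW => N; exact: hN.
Qed.

Lemma meas_series (D : set X) (h : nat -> X -> \bar R) :
  (forall k x, (0 <= h k x)%E) -> (forall k, measurable_fun D (h k)) ->
  measurable_fun D (fun x => (\sum_(0 <= i <oo) h i x)%E).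
Proof.
move=> h0 mh; have := @ge0_emeasurable_sum _ _ _ D h predT.
by apply => // k x _ _.
Qed.

End Sums.

Lemma mem_oballE {R : realType} {X : Type} (dist : X -> X -> R) z r x :
  (x \in oball dist z r) = (dist z x < r).
Proof. by apply/idP/idP => [/set_mem|/mem_set]. Qed.

Section MainEst.
Local Open Scope complex_scope.
Context {R : realType} {d : measure_display} {X : measurableType d}
  {dist : X -> X -> R} {mu : {measure set X -> \bar R}}
  (Hm : is_metric dist) (Hborel : borel_sigma dist).
Context {T : (X -> Cx R) -> (X -> Cx R)} (HT : bounded_operator mu T).
Variable r0 : R.
Hypothesis hctrl : forall F G, dclosed dist F -> dclosed dist G ->
      (r0%:E < setdist dist F G)%E ->
      forall f, L2 mu f -> Defs.ae_eq mu (indl F (indr T G) f) (fun _ => 0).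
Variables (c : nat -> X) (sel : nat -> bool).
Hypothesis hcover : forall y, exists2 j, sel j & dist (c j) y <= 2.
Variable K : R.
Hypothesis hK : forall y N,
  \sum_(n < N) ((sel n && (dist (c n) y < 2 + r0 + 1))%:R : R) <= K.
Variables (e : R) (F : set X).
Hypotheses (e0 : 0 <= e) (mF : measurable F).
Hypothesis hgood : forall n, sel n -> (exists y, cball dist (c n) 2 y /\ F y) ->
  (opnorm mu (indl (cball dist (c n) 2) T) <= e%:E)%E.

Lemma main_est f : L2 mu f -> (Qd mu (indl F T f) <= (K * e ^+ 2)%:E * Qd mu f)%E.
Proof.
move=> Lf.
have [cf _] := (L2E mu f).1 Lf.
pose B n := cball dist (c n) 2.
pose O n := oball dist (c n) (2 + r0 + 1).
pose good n : bool := `[< sel n /\ exists y, B n y /\ F y >].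
pose u n x := (((good n)%:R)%:E * (sqn (indl (B n) T f x))%:E)%E.
pose v n x := (((sel n)%:R * e ^+ 2)%:E * (sqn (\1_(O n) x * f x))%:E)%E.
have mB n : measurable (B n) := meas_cball _ Hm Hborel _ _.
have mO n : measurable (O n) := meas_oball _ Hm Hborel _ _.
have u0 n x : (0 <= u n x)%E by rewrite mule_ge0 // lee_fin ?sqn_ge0.
have v0 n x : (0 <= v n x)%E.
  by rewrite mule_ge0 // lee_fin ?sqn_ge0 // mulr_ge0 ?sqr_ge0.
have mu_ n : measurable_fun setT (u n).
  apply: emeasurable_funM; first exact: measurable_cst.
  exact: (meas_sqn _ (cmeas_indlT mu T HT (mB n) Lf)).
have mv n : measurable_fun setT (v n).
  apply: emeasurable_funM; first exact: measurable_cst.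
  exact: (meas_sqn _ (cmeas_ind _ _ (mO n) cf)).
have K0 : 0 <= K by have := hK (c 0) 0; rewrite big_ord0.
have step1 : (Qd mu (indl F T f) <= \int[mu]_x (\sum_(0 <= n <oo) u n x))%E.
  apply: ge0_le_integral => //.
  - by move=> x _; rewrite lee_fin sqn_ge0.
  - exact: (meas_sqn _ (cmeas_indlT mu T HT mF Lf)).
  - by apply: meas_series.
  move=> x _; rewrite /indl sqn_ind.
  case: (boolP (x \in F)) => xF.
  - have [j sj hj] := hcover x.
    have gj : good j.
      by apply/asboolP; split => //; exists x; split => //; exact: set_mem xF.
    apply: le_trans (series_ge_term _ j (fun n => u0 n x)).
    rewrite /u gj /indl sqn_ind /indic xF.
    have -> : x \in B j by apply: mem_set.
    by rewrite /= !mul1r mul1e.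
  - rewrite /indic (negbTE xF) mul0r.
    by apply: nneseries_ge0 => n _ _; exact: u0.
rewrite integral_nneseries // in step1.
apply: le_trans step1 _.
have step3 : (\sum_(0 <= n <oo) (\int[mu]_x u n x) <=
              \sum_(0 <= n <oo) (\int[mu]_x v n x))%E.
  apply: lee_nneseries.
    by move=> n _ _; apply: integral_ge0 => x _.
  move=> n _; rewrite /u /v ge0_integralZl_EFin //; last 2 first.
  - by move=> x _; rewrite lee_fin sqn_ge0.
  - exact: (meas_sqn _ (cmeas_indlT mu T HT (mB n) Lf)).
  rewrite ge0_integralZl_EFin //; [|by move=> x _; rewrite lee_fin sqn_ge0|
    exact: (meas_sqn _ (cmeas_ind _ _ (mO n) cf))|by rewrite mulr_ge0 ?sqr_ge0].
  case: (boolP (good n)) => gn; last first.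
    by rewrite mul0e mule_ge0 ?Q_ge0 // lee_fin mulr_ge0 ?sqr_ge0.
  move/asboolP: gn => [sn ex].
  rewrite sn /= !mul1r mul1e.
  have LO := L2_ind _ _ (mO n) Lf.
  have hae := ctrl_local Hm Hborel HT r0 hctrl (c n) 2 f (ler0n _ 2) Lf.
  rewrite -/(B n) -/(O n) in hae.
  rewrite -/(Qd mu (indl (B n) T f)).
  rewrite (Q_aeeq _ _ (cmeas_indlT mu T HT (mB n) Lf) (cmeas_indlT mu T HT (mB n) LO) hae).
  exact: (opnorm_scale mu T HT _ _ _ (mB n) e0 (hgood n sn ex) LO).
apply: le_trans step3 _.
rewrite -integral_nneseries //.
have step4 : (\int[mu]_x (\sum_(0 <= n <oo) v n x) <=
              \int[mu]_x ((K * e ^+ 2) * sqn (f x))%:E)%E.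
  apply: ge0_le_integral => //.
  - by move=> x _; apply: nneseries_ge0 => n _ _; exact: v0.
  - by apply: meas_series.
  - under eq_fun do rewrite EFinM.
    apply: emeasurable_funM; first exact: measurable_cst.
    exact: (meas_sqn _ cf).
  move=> x _; apply: series_le_cst => // N.
  have vE n : v n x = (((sel n && (dist (c n) x < 2 + r0 + 1))%:R : R) *
                       (e ^+ 2 * sqn (f x)))%:E.
    rewrite /v sqn_ind -EFinM; congr (_%:E).
    rewrite /indic mem_oballE; case: (sel n); case: (dist (c n) x < 2 + r0 + 1) => /=;
      by rewrite ?mul1r ?mul0r ?mulr0 ?mul0r.
  rewrite (eq_bigr _ (fun n _ => vE n)).
  rewrite sumEFin lee_fin -mulr_suml mulrA; apply: ler_wpM2r.
    exact: sqn_ge0.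
  apply: ler_wpM2r; first exact: sqr_ge0.
  by rewrite big_mkord; apply: hK.
apply: le_trans step4 _.
rewrite le_eqVlt; apply/orP; left; apply/eqP.
under eq_integral do rewrite EFinM.
rewrite ge0_integralZl_EFin //.
- by move=> x _; rewrite lee_fin sqn_ge0.
- exact: (meas_sqn _ cf).
- by rewrite mulr_ge0 ?sqr_ge0.
Qed.

End MainEst.

Theorem proposition5p8 (R : realType) (d : measure_display)
  (X : measurableType d) (dist : X -> X -> R)
  (mu : {measure set X -> \bar R})
  (Hmetric : is_metric dist)
  (Hproper : proper_metric dist)
  (Hnoncompact : ~ dcompact dist [set: X])
  (Hborel : borel_sigma dist)
  (Hradon : radon dist mu)
  (Hsupp : full_support dist mu)
  (Hpos : forall x r, 0 < r -> (0 < mu (cball dist x r))%E)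
  (Hbdd : forall r, 0 < r ->
     (ereal_sup [set mu (cball dist x r) | x in [set: X]] < +oo)%E)
  (Hunif : (0 < ereal_inf [set mu (cball dist x (2^-1)) | x in [set: X]])%E)
  (T : (X -> Cx R) -> (X -> Cx R))
  (HT : bounded_operator mu T)
  (Hctrl : controlled dist mu T)
  (xi : set_system X) (Hxi : ProperFilter xi)
  (Hfiner : forall A, frechet dist A -> xi A) :
  ereal_inf [set opnorm mu (indl F T) |
               F in [set F | measurable F /\ co dist xi F]] = 0%E
  <->
  (forall r : R, 0 < r -> forall eps : R, 0 < eps ->
     xi [set x | (`| opnorm mu (indl (cball dist x r) T) | < eps%:E)%E]).
Proof.
have Hm := Hmetric.
have mball := meas_cball _ Hm Hborel.
split.
  move=> Hinf r r0 eps eps0.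
  have : (ereal_inf [set opnorm mu (indl F T) |
               F in [set F | measurable F /\ co dist xi F]] < eps%:E)%E.
    by rewrite Hinf lte_fin.
  move=> /ereal_inf_lt [_ [F [mF coF] <-] hF].
  apply: filterS (coF r r0) => x hx /=.
  have sub : cball dist x r `<=` F.
    move=> w hw; apply: contrapT => nFw.
    have : (r%:E < (dist x w)%:E)%E.
      by apply: lt_le_trans hx _; apply: ereal_inf_lbound; exists w.
    by rewrite lte_fin ltNge hw.
  rewrite gee0_abs; last exact: opnorm_ge0.
  exact: le_lt_trans (opnorm_mono mu T HT _ _ (mball x r) mF sub) hF.
move=> Hlim.
have [r0 r0pos hctrl] := Hctrl.
have [c0 [c0pos hc0]] : exists c0 : R, 0 < c0 /\
    forall x, (c0%:E <= mu (cball dist x (2^-1)))%E.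
  move: Hunif; set ci := ereal_inf _ => hci.
  have hlb x : (ci <= mu (cball dist x (2^-1)))%E.
    by apply: ereal_inf_lbound; exists x.
  case E: ci => [r| |] in hci hlb *.
  - by exists r; split; [rewrite -lte_fin|].
  - by exists 1; split => // x; apply: le_trans (hlb x); rewrite leey.
  - by [].
set rho := 2 + r0 + 1.
have rhopos : 0 < rho + 2^-1.
  by rewrite /rho !addr_gt0 // ?invr_gt0.
have [M hM] : exists M : R, forall x, (mu (cball dist x (rho + 2^-1)) <= M%:E)%E.
  have := Hbdd _ rhopos; set ms := ereal_sup _ => hms.
  have hub x : (mu (cball dist x (rho + 2^-1)) <= ms)%E.
    by apply: ereal_sup_ubound; exists x.
  case E: ms => [r| |] in hms hub *.
  - by exists r.
  - by [].
  - by exists 0 => x; apply: le_trans (hub x) _; rewrite leNye.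
have [c [sel [hsep hcover]]] := net_exists dist Hm Hproper (point : X).
set K := M / c0.
have hK : forall y N,
    \sum_(n < N) ((sel n && (dist (c n) y < 2 + r0 + 1))%:R : R) <= K.
  by move=> y N; apply: (count_bound Hm Hborel c sel hsep c0 rho M c0pos hc0 hM).
have K0 : 0 <= K by have := hK (c 0%N) 0%N; rewrite big_ord0.
apply/eqP; rewrite eq_le; apply/andP; split; last first.
  by apply: le_ereal_inf_tmp => _ [F _ <-]; exact: opnorm_ge0.
apply/lee_addgt0Pr => delta delta0; rewrite add0e.
set e := delta / (K + 1).
have K1 : 0 < K + 1 by rewrite ltr_wpDl.
have e0 : 0 < e by rewrite divr_gt0.
pose G := [set z | (`| opnorm mu (indl (cball dist z 5) T) | < e%:E)%E].
pose F := \bigcup_(z in G) oball dist z 1.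
have oF : dopen dist F.
  move=> y [z Gz hz]; have [r rpos hr] := dopen_oball _ Hm z 1 y hz.
  by exists r => // w /hr hw; exists z.
have mF : measurable F := meas_open _ Hborel _ oF.
have absE (B : set X) : `| opnorm mu (indl B T) |%E = opnorm mu (indl B T).
  by rewrite gee0_abs //; exact: opnorm_ge0.
have coF : co dist xi F.
  move=> r rpos; have rpos6 : 0 < r + 6 by rewrite addr_gt0.
  apply: filterS (Hlim _ rpos6 _ e0) => x /= hx.
  apply: (@lt_le_trans _ _ (r + 1)%:E); first by rewrite lte_fin ltrDl.
  apply: le_ereal_inf_tmp => _ [y nFy <-]; rewrite lee_fin.
  rewrite leNgt; apply/negP => hxy; apply: nFy.
  exists y; last by rewrite /oball /= (dist_xx _ Hm) ltr01.
  rewrite /G /= absE; apply: le_lt_trans _ hx; rewrite absE.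
  apply: opnorm_mono => //; apply: cball_sub => //.
  rewrite [r + 6](_ : _ = (r + 1) + 5); last by rewrite -addrA.
  by rewrite lerD2r ltW.
have hgood : forall n, sel n -> (exists y, cball dist (c n) 2 y /\ F y) ->
    (opnorm mu (indl (cball dist (c n) 2) T) <= e%:E)%E.
  move=> n _ [y [hy [z Gz hz]]].
  apply: le_trans (ltW Gz); rewrite absE; apply: opnorm_mono => //.
  apply: cball_sub => //.
  have h1 := dist_tri _ Hm z y (c n).
  have h2 : dist y (c n) <= 2 by rewrite (distC _ Hm); exact: hy.
  move: hz; rewrite /oball /= => hz.
  lra.
have hest := main_est Hm Hborel HT r0 hctrl c sel hcover K hK e F (ltW e0) mF hgood.
apply: ge_ereal_inf; exists (opnorm mu (indl F T)); first by exists F.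
apply: ge_ereal_sup => _ [f [Lf nf] <-].
rewrite L2normE (sqrte_leE _ _ (ltW delta0)) ?Q_ge0 //.
rewrite L2normE (sqrte_leE _ _ ler01) ?Q_ge0 // expr1n in nf.
apply: le_trans (hest f Lf) _.
apply: le_trans (lee_wpmul2l _ nf) _.
  by rewrite lee_fin mulr_ge0 ?sqr_ge0.
rewrite mule1 lee_fin /e expr_div_n mulrA ler_pdivrMr ?exprn_gt0 //.
rewrite mulrC ler_wpM2l ?sqr_ge0 //.
nra.
Qed.
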